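(* For every zero-normalized $\Gamma$-semimodule $\Delta$ one has $\widehat{\widehat{\Delta}}=\Delta$.
   Context: Let $m,n$ be coprime positive integers and $\Gamma=\{am+bn:a,b\in\mathbb{Z}_{\ge0}\}$. A $\Gamma$-semimodule is $\Delta\subset\mathbb{Z}_{\ge0}$ with $\Delta+\Gamma\subset\Delta$; it is zero-normalized if $\min\Delta=0$. The dual is $\Delta^*=\{\varphi\in\mathbb{Z}:\varphi+\Delta\subset\Gamma\}$, and $\widehat\Delta=\Delta^*-\min\Delta^*$ is its zero-normalization; equivalently $\widehat\Delta=\max(\mathbb{Z}\setminus\Delta)-(\mathbb{Z}\setminus\Delta)$. *)

(* Defs.v *)
From Stdlib Require Import ZArith Lia.
Open Scope Z_scope.

Definition inGamma (m n g : Z) : Prop :=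
  exists a b : Z, 0 <= a /\ 0 <= b /\ g = a * m + b * n.

Definition isMin (S : Z -> Prop) (mu : Z) : Prop :=
  S mu /\ forall x, S x -> mu <= x.

Definition semimodule (m n : Z) (D : Z -> Prop) : Prop :=
  (forall x, D x -> 0 <= x) /\
  (forall x g, D x -> inGamma m n g -> D (x + g)).

Definition zero_normalized (D : Z -> Prop) : Prop := isMin D 0.

Definition dual (m n : Z) (D : Z -> Prop) : Z -> Prop :=
  fun phi => forall d, D d -> inGamma m n (phi + d).

Definition hat (m n : Z) (D : Z -> Prop) : Z -> Prop :=
  fun x => exists mu, isMin (dual m n D) mu /\ dual m n D (x + mu).

(* Main.v *)
Require Import Defs.
From Stdlib Require Import ZArith Znumtheory Lia Classical.
Open Scope Z_scope.

Section S.
Variables (m n : Z) (hm : 0 < m) (hn : 0 < n) (hmn : Z.gcd m n = 1).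
Let F := m * n - m - n.

Lemma gam_nonneg g : inGamma m n g -> 0 <= g.
Proof. intros (a & b & ha & hb & ->). nia. Qed.

Lemma sym_or z : inGamma m n z \/ inGamma m n (F - z).
Proof.
  destruct (Zis_gcd_bezout _ _ _ (Zgcd_is_gcd m n)) as [u v Huv].
  rewrite hmn in Huv.
  set (a := (z * u) mod n). set (q := (z * u) / n).
  assert (Ha : 0 <= a < n) by (apply Z.mod_pos_bound; lia).
  assert (Hq : z * u = n * q + a) by (apply Z.div_mod; lia).
  set (b := z * v + m * q).
  assert (Hz : z = a * m + b * n).
  { unfold b. replace z with (z * (u * m + v * n)) at 1 by (rewrite Huv; ring).
    assert (a = z*u - n*q) by lia. rewrite H. ring. }
  destruct (Z_le_gt_dec 0 b).
  - left. exists a, b. lia.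
  - right. exists (n - 1 - a), (- b - 1). unfold F. split; [lia|split;[lia|]].
    rewrite Hz. ring.
Qed.

Lemma sym_not z : inGamma m n z -> inGamma m n (F - z) -> False.
Proof.
  intros (a & b & ha & hb & Hz) (a' & b' & ha' & hb' & Hz').
  assert (E : (a + a' + 1) * m + (b + b' + 1) * n = m * n) by (unfold F in *; lia).
  assert (rn : rel_prime n m) by (apply Zgcd_1_rel_prime; rewrite Z.gcd_comm; auto).
  assert (rm : rel_prime m n) by (apply Zgcd_1_rel_prime; auto).
  assert (d1 : (n | m * (a + a' + 1))).
  { exists (m - b - b' - 1). nia. }
  assert (d2 : (m | n * (b + b' + 1))).
  { exists (n - a - a' - 1). nia. }
  destruct (Gauss _ _ _ d1 rn) as [k Hk].
  destruct (Gauss _ _ _ d2 rm) as [l Hl].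
  assert (1 <= k) by nia. assert (1 <= l) by nia. nia.
Qed.

Lemma big_in y : F < y -> inGamma m n y.
Proof.
  intros H. destruct (sym_or y) as [|H']; auto.
  apply gam_nonneg in H'. lia.
Qed.

Definition closed (E : Z -> Prop) := forall x g, E x -> inGamma m n g -> E (x + g).

Lemma dual_char E (hE : closed E) phi : dual m n E phi <-> ~ E (F - phi).
Proof.
  split.
  - intros Hd HE. specialize (Hd _ HE). replace (phi + (F - phi)) with (F - 0) in Hd by ring.
    apply (sym_not 0); auto. exists 0, 0. lia.
  - intros HE d Hd. destruct (sym_or (phi + d)) as [|H]; auto.
    exfalso. apply HE. replace (F - phi) with (d + (F - (phi + d))) by ring. auto.
Qed.

Lemma hat_char E (hE : closed E) K (hK : ~ E K) (hmax : forall y, ~ E y -> y <= K) x :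
  hat m n E x <-> ~ E (K - x).
Proof.
  assert (Hmin : isMin (dual m n E) (F - K)).
  { split.
    - apply dual_char; auto. replace (F - (F - K)) with K by ring. auto.
    - intros y Hy. apply dual_char in Hy; auto. apply hmax in Hy. lia. }
  split.
  - intros (mu & Hmu & Hd).
    assert (mu = F - K).
    { destruct Hmu as [H1 H2]. destruct Hmin as [H3 H4].
      specialize (H2 _ H3). specialize (H4 _ H1). lia. }
    subst mu. apply dual_char in Hd; auto.
    replace (K - x) with (F - (x + (F - K))) by ring. auto.
  - intros H. exists (F - K). split; auto. apply dual_char; auto.
    replace (F - (x + (F - K))) with (K - x) by ring. auto.
Qed.

Lemma max_exists (P : Z -> Prop) a B : P a -> (forall y, P y -> y <= B) ->
  exists K, P K /\ forall y, P y -> y <= K.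
Proof.
  intros Pa HB.
  assert (forall k : nat, forall a, P a -> (Z.to_nat (B - a) <= k)%nat ->
    exists K, P K /\ forall y, P y -> y <= K).
  { induction k as [|k IH]; intros a0 Pa0 Hk.
    - exists a0. split; auto. intros y Py. specialize (HB _ Py). lia.
    - destruct (classic (exists y, P y /\ a0 < y)) as [(y & Py & Hy)|Hno].
      + apply (IH y Py). specialize (HB _ Py). lia.
      + exists a0. split; auto. intros y Py. destruct (Z_le_gt_dec y a0); auto.
        exfalso. apply Hno. exists y. split; auto. lia. }
  apply (H (Z.to_nat (B - a)) a Pa). lia.
Qed.

End S.

Theorem mainTheorem10 (m n : Z) (hm : 0 < m) (hn : 0 < n) (hmn : Z.gcd m n = 1)
  (D : Z -> Prop) (hD : semimodule m n D) (h0 : zero_normalized D) :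
  forall x : Z, hat m n (hat m n D) x <-> D x.
Proof.
  destruct hD as [Dpos Dcl]. destruct h0 as [D0 _].
  assert (cD : closed m n D) by exact Dcl.
  destruct (max_exists m n (fun y => ~ D y) (-1) (m * n - m - n)) as (M & HM & HMmax).
  { intros H. apply Dpos in H. lia. }
  { intros y Hy. destruct (Z_le_gt_dec y (m*n-m-n)); auto. exfalso. apply Hy.
    replace y with (0 + y) by ring. apply Dcl; auto. apply big_in; auto; lia. }
  pose proof (hat_char m n hm hn hmn D cD M HM HMmax) as HE.
  assert (cE : closed m n (hat m n D)).
  { intros x g Hx Hg. apply HE. apply HE in Hx. intro H. apply Hx.
    replace (M - x) with ((M - (x + g)) + g) by ring. auto. }
  assert (nE : ~ hat m n D M).
  { intro H. apply HE in H. apply H. replace (M - M) with 0 by ring. auto. }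
  assert (mE : forall y, ~ hat m n D y -> y <= M).
  { intros y Hy. destruct (classic (D (M - y))) as [H|H].
    - apply Dpos in H. lia.
    - exfalso. apply Hy. apply HE. auto. }
  intros x. rewrite (hat_char m n hm hn hmn _ cE M nE mE x).
  split.
  - intros H. apply NNPP. intro H'. apply H. apply HE.
    replace (M - (M - x)) with x by ring. auto.
  - intros H H'. apply HE in H'. apply H'. replace (M - (M - x)) with x by ring. auto.
Qed.
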